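(* For every $t=0,1,\dots,T-1$ and every $x\in\mathbb R$, $0\le v^\pi_t(x)-v_t(x)=V_t(x)-V^*_t(x)+\epsilon_t(x)$.
   Context: Model. Fix an integer horizon $T\ge 2$, a discount factor $\alpha\in(0,1]$, and for $t=0,\dots,T-1$: unit ordering costs $c_t\in\mathbb R$, a salvage coefficient $c_T\in\mathbb R$, setup costs $K_t\ge 0$, functions $G_t:\mathbb R\to\mathbb R$, and independent nonnegative random demands $D_0,\dots,D_{T-1}$ with right-continuous distribution functions $F_t$ and finite means; all expectations appearing are assumed finite. Let $\delta(z)=1$ for $z>0$, $\delta(0)=0$. Put $C_t(y)=(c_t-\alpha c_{t+1})y+G_t(y)+\alpha c_{t+1}E[D_t]$. Standing assumptions: (i) each $C_t$ is convex with $C_t(y)\to+\infty$ as $|y|\to\infty$; (ii) $K_t\ge \alpha K_{t+1}$ for $t=0,\dots,T-2$. Optimal costs: $v_T(x)=-c_Tx$ and $v_t(x)=\min_{y\ge x}\{K_t\delta(y-x)+c_t(y-x)+G_t(y)+\alpha E[v_{t+1}(y-D_t)]\}$; $V^*_t(x)=v_t(x)+c_tx$. Grid construction. Fix $\theta>0$, $z_m=m\theta$, $Z_\theta=\{z_m:m\in\mathbb Z\}$, $f_t(n)=F_t(z_{n+1})-F_t(z_n)$ ($n\ge -1$). $C^m_t=\min\{y: C_t(y)=\min_x C_t(x)\}$; with $z_{n_0}<C^m_t\le z_{n_0+1}$, $S^U_t=\min\{z_m\in Z_\theta: z_m\ge C^m_t,\ C_t(z_m)>C_t(z_{n_0})+K_t\}$.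 $s_{T-1}$ is a point with $s_{T-1}\le C^m_{T-1}$, $C_{T-1}(s_{T-1})=C_{T-1}(C^m_{T-1})+K_{T-1}$; $\bar I_{T-1}=s_{T-1}$. For $t=T-2,\dots,0$: $I_t=\max\{z_m\in Z_\theta: z_m<\min(\bar I_{t+1}-\theta,C^m_t)\}$, $\bar I_t=\max\{z_m\in Z_\theta: z_m\le I_t,\ C_t(z_m)>C_t(I_t)+K_t\}+\theta$. $H_{T-1}=C_{T-1}$, $S_{T-1}=C^m_{T-1}$; $V_t(y)=H_t(S_t)+K_t$ for $y<s_t$, $V_t(y)=H_t(y)$ for $y\ge s_t$. For $t=T-2,\dots,0$: $H_t(y)=C_t(y)+\alpha\sum_{n=-1}^\infty V_{t+1}(y-z_n)f_t(n)$; $S_t=\max\{z_m\in Z_\theta: I_t\le z_m\le S^U_t,\ H_t(z_m)=\min\{H_t(z_n):z_n\in Z_\theta, I_t\le z_n\le S^U_t\}\}$; $s_t=S_t$ if $K_t=0$, else $s_t=\min\{z_m\in Z_\theta:\bar I_t\le z_m\le S_t,\ H_t(z_m)\le H_t(S_t)+K_t\}$. Policy cost. $v^\pi_T(x)=-c_Tx$ and, for $t\le T-1$, with $y_t(x)=S_t$ if $x<s_t$ and $y_t(x)=x$ otherwise, $v^\pi_t(x)=K_t\delta(y_t(x)-x)+c_t(y_t(x)-x)+G_t(y_t(x))+\alpha E[v^\pi_{t+1}(y_t(x)-D_t)]$. Error terms. For $t=1,\dots,T-1$, $A_t(x)=E[V_t(x-D_{t-1})]-\sum_{n=-1}^{\infty}V_t(x-z_n)f_{t-1}(n)$.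 $\epsilon_{T-1}\equiv 0$; for $t=0,\dots,T-2$: $\epsilon_t(x)=\alpha A_{t+1}(S_t)+\alpha E[\epsilon_{t+1}(S_t-D_t)]$ if $x<s_t$, and $\epsilon_t(x)=\alpha A_{t+1}(x)+\alpha E[\epsilon_{t+1}(x-D_t)]$ if $x\ge s_t$. *)

(* Defs.v *)
From HB Require Import structures.
From mathcomp Require Import all_boot all_order all_algebra.
From mathcomp Require Import all_classical all_reals all_analysis.

Set Implicit Arguments.
Unset Strict Implicit.
Unset Printing Implicit Defensive.

Import Order.TTheory GRing.Theory Num.Theory.
Local Open Scope classical_set_scope.
Local Open Scope ring_scope.

Section Inventory.
Variable R : realType.

Variable T : nat.
Variable alpha : R.
Variable c : nat -> R.                  (* c_0, ..., c_{T-1} unit costs; c_T salvage *)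
Variable K : nat -> R.
Variable G : nat -> R -> R.
Variable mu : nat -> probability R R.

Definition Ex (t : nat) (f : R -> R) : R := fine (\int[mu t]_d (f d)%:E).

Definition Fd (t : nat) (z : R) : R := fine (mu t [set d | d <= z]).

Definition delta (z : R) : R := if 0 < z then 1 else 0.

Definition Cfun (t : nat) (y : R) : R :=
  (c t - alpha * c t.+1) * y + G t y + alpha * c t.+1 * Ex t id.

(* vaux n = v_{T-n} *)
Fixpoint vaux (n : nat) : R -> R :=
  match n with
  | 0 => fun x => - c T * x
  | n'.+1 => fun x =>
      let t := (T - n'.+1)%N in
      inf [set r | exists y, x <= y /\
             r = K t * delta (y - x) + c t * (y - x) + G t y
                 + alpha * Ex t (fun d => vaux n' (y - d))]
  end.

Definition v (t : nat) : R -> R := vaux (T - t).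
Definition Vstar (t : nat) (x : R) : R := v t x + c t * x.

Variable theta : R.
Variable sT1 : R.

Definition zg (m : int) : R := m%:~R * theta.
Definition grid : set R := [set z | exists m : int, z = zg m].

Definition Cm (t : nat) : R :=
  inf [set y | Cfun t y = inf (range (Cfun t))].

Definition zn0 (t : nat) : R := sup [set z | grid z /\ z < Cm t].

Definition SU (t : nat) : R :=
  inf [set z | grid z /\ Cm t <= z /\ Cfun t (zn0 t) + K t < Cfun t z].

(* Ibaraux n = \bar I_{T-1-n} *)
Fixpoint Ibaraux (n : nat) : R :=
  match n with
  | 0 => sT1
  | n'.+1 =>
      let t := (T - 1 - n'.+1)%N in
      let It := sup [set z | grid z /\ z < Num.min (Ibaraux n' - theta) (Cm t)] in
      sup [set z | grid z /\ z <= It /\ Cfun t It + K t < Cfun t z] + theta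
  end.

Definition Ibar (t : nat) : R := Ibaraux (T - 1 - t).
Definition Igrid (t : nat) : R :=
  sup [set z | grid z /\ z < Num.min (Ibar t.+1 - theta) (Cm t)].

(* f_t(n) for n = k - 1 >= -1 (k : nat) : F_t(z_{k}) - F_t(z_{k-1}) *)
Definition fmass (t k : nat) : R := Fd t (zg k%:Z) - Fd t (zg (k%:Z - 1)).

(* sum_{n >= -1} W(y - z_n) f_t(n), reindexed with n = k - 1 *)
Definition dsum (t : nat) (W : R -> R) (y : R) : R :=
  limn (fun N => \sum_(0 <= k < N) (W (y - zg (k%:Z - 1)) * fmass t k)).

Record stage := Stage { stH : R -> R; stS : R; sts : R }.

Definition Vof (Kt : R) (st : stage) (y : R) : R :=
  if y < sts st then stH st (stS st) + Kt else stH st y.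

(* stgaux n = (H_t, S_t, s_t) for t = T-1-n *)
Fixpoint stgaux (n : nat) : stage :=
  match n with
  | 0 => Stage (Cfun (T - 1)) (Cm (T - 1)) sT1
  | n'.+1 =>
      let t := (T - 1 - n'.+1)%N in
      let Vn := Vof (K t.+1) (stgaux n') in
      let H := fun y => Cfun t y + alpha * dsum t Vn y in
      let It := Igrid t in
      let Hmin := inf [set r | exists z, grid z /\ It <= z /\ z <= SU t /\ r = H z] in
      let S := sup [set z | grid z /\ It <= z /\ z <= SU t /\ H z = Hmin] in
      let s := if K t == 0 then S
               else inf [set z | grid z /\ Ibar t <= z /\ z <= S /\ H z <= H S + K t] in
      Stage H S s
  end.

Definition Hf (t : nat) : R -> R := stH (stgaux (T - 1 - t)).
Definition Sp (t : nat) : R := stS (stgaux (T - 1 - t)).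
Definition sp (t : nat) : R := sts (stgaux (T - 1 - t)).
Definition Vf (t : nat) : R -> R := Vof (K t) (stgaux (T - 1 - t)).

Definition ypol (t : nat) (x : R) : R := if x < sp t then Sp t else x.

(* vpiaux n = v^pi_{T-n} *)
Fixpoint vpiaux (n : nat) : R -> R :=
  match n with
  | 0 => fun x => - c T * x
  | n'.+1 => fun x =>
      let t := (T - n'.+1)%N in
      let y := ypol t x in
      K t * delta (y - x) + c t * (y - x) + G t y
      + alpha * Ex t (fun d => vpiaux n' (y - d))
  end.

Definition vpi (t : nat) : R -> R := vpiaux (T - t).

(* A_t(x), t >= 1 *)
Definition Aerr (t : nat) (x : R) : R :=
  Ex t.-1 (fun d => Vf t (x - d)) - dsum t.-1 (Vf t) x.

(* epsaux n = eps_{T-1-n} *)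
Fixpoint epsaux (n : nat) : R -> R :=
  match n with
  | 0 => fun _ => 0
  | n'.+1 => fun x =>
      let t := (T - 1 - n'.+1)%N in
      let y := ypol t x in
      alpha * Aerr t.+1 y + alpha * Ex t (fun d => epsaux n' (y - d))
  end.

Definition eps (t : nat) : R -> R := epsaux (T - 1 - t).

End Inventory.

(* Main.v *)
Require Import Defs.
From HB Require Import structures.
From mathcomp Require Import all_boot all_order all_algebra.
From mathcomp Require Import all_classical all_reals all_analysis.
From mathcomp Require Import ring lra zify.

Import Order.TTheory GRing.Theory Num.Theory.
Local Open Scope classical_set_scope.
Local Open Scope ring_scope.


Lemma ExD (R : realType) (mu : nat -> probability R R) t (f g : R -> R) :
  (mu t).-integrable setT (fun d => (f d)%:E) ->
  (mu t).-integrable setT (fun d => (g d)%:E) ->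
  Ex mu t (fun d => f d + g d) = Ex mu t f + Ex mu t g.
Proof.
move=> hf hg; rewrite /Ex.
under eq_integral do rewrite EFinD.
rewrite integralD //.
rewrite fineD //; exact: integrable_fin_num.
Qed.

Lemma ExZ (R : realType) (mu : nat -> probability R R) t (f : R -> R) k :
  (mu t).-integrable setT (fun d => (f d)%:E) ->
  Ex mu t (fun d => k * f d) = k * Ex mu t f.
Proof.
move=> hf; rewrite /Ex.
under eq_integral do rewrite EFinM.
rewrite integralZl //.
rewrite fineM //; exact: integrable_fin_num.
Qed.

Lemma Excst (R : realType) (mu : nat -> probability R R) t k :
  Ex mu t (fun _ => k) = k.
Proof.
rewrite /Ex.
have := expectation_cst (mu t) k.
rewrite unlock /cst => ->. by [].
Qed.

Lemma int_cst (R : realType) (mu : nat -> probability R R) t k :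
  (mu t).-integrable setT (fun _ => k%:E).
Proof. exact: (finite_measure_integrable_cst (mu t) k measurableT). Qed.

Lemma ExLe (R : realType) (mu : nat -> probability R R) t (f g : R -> R) :
  (mu t).-integrable setT (fun d => (f d)%:E) ->
  (mu t).-integrable setT (fun d => (g d)%:E) ->
  (forall d, f d <= g d) ->
  Ex mu t f <= Ex mu t g.
Proof.
move=> hf hg hfg; rewrite /Ex.
apply: fine_le; try exact: integrable_fin_num.
apply: le_integral => // d _; rewrite lee_fin; exact: hfg.
Qed.
Lemma zg_le (R : realType) (theta : R) m n : 0 < theta ->
  (zg theta m <= zg theta n) = (m <= n).
Proof. by move=> ht; rewrite /zg ler_pM2r // ler_int. Qed.

Lemma zg_lt (R : realType) (theta : R) m n : 0 < theta ->
  (zg theta m < zg theta n) = (m < n).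
Proof. by move=> ht; rewrite /zg ltr_pM2r // ltr_int. Qed.

Lemma zgS (R : realType) (theta : R) m : zg theta (m + 1) = zg theta m + theta.
Proof. by rewrite /zg intrD mulrDl mul1r. Qed.

Lemma grid_sup (R : realType) (theta : R) (E : set R) : 0 < theta ->
  (forall z, E z -> grid theta z) -> E !=set0 -> has_ubound E -> E (sup E).
Proof.
move=> ht hE hne hub.
have hs : has_sup E by split.
have [e Ee He] := sup_adherent ht hs.
suff -> : sup E = e by [].
apply/le_anti/andP; split; last exact: sup_upper_bound.
apply: ge_sup => // e' Ee'.
have h1 := sup_upper_bound hs Ee'.
have [m em] := hE _ Ee. have [m' em'] := hE _ Ee'.
rewrite em em' in h1 He *.
rewrite zg_le //; rewrite -ltzD1 -(zg_lt _ _ _ _ ht) zgS. lra.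
Qed.

Lemma grid_below (R : realType) (theta : R) b : 0 < theta ->
  exists m, zg theta m < b.
Proof.
move=> ht; exists (Num.floor ((b - theta) / theta)).
have := floor_le ((b - theta) / theta). rewrite /zg -(ler_pM2r ht) divfK ?gt_eqF //. lra.
Qed.

Lemma grid_above (R : realType) (theta : R) b : 0 < theta ->
  exists m, b < zg theta m.
Proof.
move=> ht; exists (Num.floor (b / theta) + 1).
have := floorD1_gt (b / theta). rewrite /zg -(ltr_pM2r ht) divfK ?gt_eqF //.
Qed.

Lemma zg_floor (R : realType) (theta : R) m hi : 0 < theta ->
  zg theta m <= hi -> (m <= Num.floor (hi / theta))%R.
Proof.
move=> ht h; rewrite floor_ge_int ler_pdivlMr //.
Qed.

Lemma int_min (R : realType) (f : int -> R) (m0 : int) (k : nat) :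
  exists m, (m0 <= m <= m0 + k%:Z)%R /\
    forall m', (m0 <= m' <= m0 + k%:Z)%R -> f m <= f m'.
Proof.
elim: k => [|k [m [hm hmin]]].
  exists m0; split; first by rewrite addr0 lexx.
  move=> m' hm'; have -> : m' = m0 by lia. by [].
have [hle|hlt] := leP (f m) (f (m0 + k.+1%:Z)).
- exists m; split; first by lia.
  move=> m' hm'. have [h|h] : (m' <= m0 + k%:Z)%R \/ m' = m0 + k.+1%:Z by lia.
  + apply: hmin; lia.
  + by rewrite h.
- exists (m0 + k.+1%:Z); split; first by lia.
  move=> m' hm'. have [h|h] : (m' <= m0 + k%:Z)%R \/ m' = m0 + k.+1%:Z by lia.
  + apply: le_trans (ltW hlt) _; apply: hmin; lia.
  + by rewrite h.
Qed.
Lemma conv_lb (R : realType) (f : R -> R) :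
 (forall x y l : R, 0 <= l <= 1 -> f (l*x + (1-l)*y) <= l * f x + (1-l) * f y) ->
 (forall M : R, exists N : R, forall y, N < `|y| -> M < f y) ->
 exists m, forall y, m <= f y.
Proof.
move=> hcv hco.
have [N hN] := hco (f 0).
set A := `|N| + 1.
have hA : 0 < A by rewrite /A; have := normr_ge0 N; lra.
set M := Num.max (f A) (f (-A)).
have hMa : f A <= M by rewrite le_max lexx.
have hMb : f (-A) <= M by rewrite le_max lexx orbT.
have hup : forall z, `|z| <= A -> f z <= M.
  move=> z hz.
  have hz1 : - A <= z <= A by rewrite -ler_norml.
  set l := (z + A) / (2 * A).
  have hl0 : 0 <= l by rewrite /l divr_ge0 //; lra.
  have hl1 : l <= 1 by rewrite /l ler_pdivrMr; lra.
  have -> : z = l * A + (1 - l) * (- A).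
    rewrite /l; field; rewrite gt_eqF //; lra.
  apply: le_trans (hcv _ _ _ _) _; first by rewrite hl0 hl1.
  nra.
exists (Num.min (f 0) (2 * f 0 - M)) => y.
have [h|h] := ltP N `|y|.
  by rewrite ge_min (ltW (hN _ h)).
have hy : `|y| <= A by rewrite /A; have := ler_norm N; lra.
have hy' : `|- y| <= A by rewrite normrN.
have h0 := hcv y (- y) (1/2) ltac:(apply/andP; split; lra).
have e0 : 1/2 * y + (1 - 1/2) * (-y) = 0 :> R by field.
rewrite e0 in h0.
have := hup _ hy'.
move=> h2; rewrite ge_min; apply/orP; right. lra.
Qed.

Lemma sS_gen (R : realType) (theta : R) (H : R -> R) I SU Ib Kt :
  0 < theta -> 0 <= Kt -> grid theta I -> Ib <= I -> I <= SU ->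
  let Hmin := inf [set r | exists z, grid theta z /\ I <= z /\ z <= SU /\ r = H z] in
  let S := sup [set z | grid theta z /\ I <= z /\ z <= SU /\ H z = Hmin] in
  I <= S /\
  (if Kt == 0 then S else
     inf [set z | grid theta z /\ Ib <= z /\ z <= S /\ H z <= H S + Kt]) <= S.
Proof.
move=> ht hK [m0 em0] hIb hISU Hmin S.
have hm0 : (m0 <= Num.floor (SU / theta))%R by apply: zg_floor => //; rewrite -em0.
pose k := `|Num.floor (SU / theta) - m0|%N.
have ek : (m0 + k%:Z = Num.floor (SU / theta))%R by rewrite /k; lia.
have [ms [hms hmin]] := int_min _ (fun m => H (zg theta m)) m0 k.
rewrite ek in hms hmin.
have inr : forall z, grid theta z -> I <= z -> z <= SU ->
    exists2 m', z = zg theta m' & (m0 <= m' <= Num.floor (SU / theta))%R.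
  move=> z [m' ->] h1 h2; exists m' => //.
  rewrite -(zg_le _ theta) // -em0 h1 /=; exact: zg_floor.
have hzs1 : I <= zg theta ms by rewrite em0 zg_le //; case/andP: hms.
have hzs2 : zg theta ms <= SU.
  case/andP: hms => _ h. apply: le_trans (_ : zg theta (Num.floor (SU / theta)) <= SU).
    by rewrite zg_le.
  rewrite /zg -ler_pdivlMr //; exact: floor_le.
have hlb : lbound [set r | exists z, grid theta z /\ I <= z /\ z <= SU /\ r = H z]
             (H (zg theta ms)).
  move=> r [z [gz [h1 [h2 ->]]]].
  have [m' -> hm'] := inr z gz h1 h2. exact: hmin.
have eHmin : Hmin = H (zg theta ms).
  apply/le_anti/andP; split.
    apply: (ge_inf (ex_intro _ _ hlb)). exists (zg theta ms); split; first by exists ms.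
    by [].
  apply: lb_le_inf => //. exists (H (zg theta ms)), (zg theta ms); split; first by exists ms.
  by [].
have hSin : [set z | grid theta z /\ I <= z /\ z <= SU /\ H z = Hmin] S.
  apply: (grid_sup _ theta) => //.
  - by move=> z [gz _].
  - exists (zg theta ms); split; first by exists ms.
    by rewrite eHmin.
  - by exists SU => z [_ [_ [h _]]].
have [gS [hIS [hSSU hHS]]] := hSin.
split => //.
case: eqP => // _.
have hl : has_lbound [set z | grid theta z /\ Ib <= z /\ z <= S /\ H z <= H S + Kt].
  by exists Ib => z [_ [h _]].
apply: (ge_inf hl); split => //; split; first exact: le_trans hIS.
split => //. lra.
Qed.

Lemma Igrid_gen (R : realType) (theta : R) b : 0 < theta ->
  grid theta (sup [set z | grid theta z /\ z < b]) /\
  sup [set z | grid theta z /\ z < b] < b.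
Proof.
move=> ht.
have h : [set z | grid theta z /\ z < b] (sup [set z | grid theta z /\ z < b]).
  apply: (grid_sup _ theta) => //.
  - by move=> z [gz _].
  - have [m hm] := grid_below _ theta b ht. exists (zg theta m); split => //; by exists m.
  - by exists b => z [_ /ltW].
by case: h.
Qed.

Lemma Ibar_gen (R : realType) (theta : R) (f : R -> R) I Kt :
  0 < theta -> 0 <= Kt -> grid theta I ->
  (forall M : R, exists N : R, forall y, N < `|y| -> M < f y) ->
  sup [set z | grid theta z /\ z <= I /\ f I + Kt < f z] + theta <= I.
Proof.
move=> ht hK [m0 em0] hco.
have [N hN] := hco (f I + Kt).
have [m hm] := grid_below _ theta (Num.min I (- `|N|)) ht.
have h : [set z | grid theta z /\ z <= I /\ f I + Kt < f z]
           (sup [set z | grid theta z /\ z <= I /\ f I + Kt < f z]).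
  apply: (grid_sup _ theta) => //.
  - by move=> z [gz _].
  - exists (zg theta m); split; first by exists m.
    move: hm; rewrite lt_min => /andP[h1 h2]; split; first exact: ltW.
    apply: hN. rewrite ltr0_norm; last by have := normr_ge0 N; lra.
    have := ler_norm N; lra.
  - by exists I => z [_ [h _]].
case: h => [[m1 em1] [h1 h2]].
rewrite em1 em0 -zgS zg_le //.
have : m1 != m0.
  apply/eqP => e; rewrite em1 em0 e in h2; lra.
rewrite em1 em0 zg_le // in h1. lia.
Qed.

Lemma SU_gen (R : realType) (theta : R) (f : R -> R) Cm a :
  0 < theta ->
  (forall M : R, exists N : R, forall y, N < `|y| -> M < f y) ->
  Cm <= inf [set z | grid theta z /\ Cm <= z /\ a < f z].
Proof.
move=> ht hco.
have [N hN] := hco a.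
have [m hm] := grid_above _ theta (Num.max Cm `|N|) ht.
apply: lb_le_inf; last by move=> z [_ [h _]].
exists (zg theta m); split; first by exists m.
move: hm; rewrite gt_max => /andP[h1 h2]; split; first exact: ltW.
apply: hN. rewrite gtr0_norm; last by have := normr_ge0 N; lra.
have := ler_norm N; lra.
Qed.

Lemma Ex_aff (R : realType) (mu : nat -> probability R R) t (a b : R) :
  (mu t).-integrable setT (fun d => d%:E) ->
  (mu t).-integrable setT (fun d => (a + b * d)%:E) /\
  Ex mu t (fun d => a + b * d) = a + b * Ex mu t id.
Proof.
move=> hD.
have i1 := int_cst R mu t a.
have i2 : (mu t).-integrable setT (fun d => (b * d)%:E).
  exact: (integrableZl measurableT b hD).
split; first exact: (integrableD measurableT i1 i2).
rewrite ExD // Excst ExZ //.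
Qed.

Lemma delta_ge0 (R : realType) (z : R) : 0 <= delta z.
Proof. by rewrite /delta; case: ifP. Qed.

Lemma delta0 (R : realType) : delta (0 : R) = 0.
Proof. by rewrite /delta ltxx. Qed.

Lemma delta_pos (R : realType) (z : R) : 0 < z -> delta z = 1.
Proof. by rewrite /delta => ->. Qed.
Theorem theorem4p1 (R : realType) (T : nat) (alpha : R) (c K : nat -> R)
  (G : nat -> R -> R) (mu : nat -> probability R R) (theta sT1 : R)
  (hT : (2 <= T)%N)
  (halpha : 0 < alpha <= 1)
  (hK0 : forall t, (t < T)%N -> 0 <= K t)
  (hK : forall t, (t.+1 < T)%N -> alpha * K t.+1 <= K t)
  (hCconv : forall t, (t < T)%N -> forall x y l : R, 0 <= l <= 1 ->
      Cfun alpha c G mu t (l * x + (1 - l) * y)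
      <= l * Cfun alpha c G mu t x + (1 - l) * Cfun alpha c G mu t y)
  (hCcoer : forall t, (t < T)%N -> forall M : R, exists N : R,
      forall y, N < `|y| -> M < Cfun alpha c G mu t y)
  (hDnonneg : forall t, (t < T)%N -> mu t [set d | d < 0] = 0%E)
  (hDmean : forall t, (t < T)%N -> (mu t).-integrable setT (fun d => d%:E))
  (hEv : forall t, (t < T)%N -> forall y,
      (mu t).-integrable setT (fun d => (v T alpha c K G mu t.+1 (y - d))%:E))
  (hEvpi : forall t, (t < T)%N -> forall y,
      (mu t).-integrable setT
        (fun d => (vpi T alpha c K G mu theta sT1 t.+1 (y - d))%:E))
  (hEV : forall t, (0 < t < T)%N -> forall x,
      (mu t.-1).-integrable setT
        (fun d => (Vf T alpha c K G mu theta sT1 t (x - d))%:E))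
  (hEeps : forall t, (t.+1 < T)%N -> forall x,
      (mu t).-integrable setT
        (fun d => (eps T alpha c K G mu theta sT1 t.+1 (x - d))%:E))
  (htheta : 0 < theta)
  (hsT1 : sT1 <= Cm alpha c G mu (T - 1)%N)
  (hsT1C : Cfun alpha c G mu (T - 1)%N sT1
           = Cfun alpha c G mu (T - 1)%N (Cm alpha c G mu (T - 1)%N) + K (T - 1)%N) :
  forall t, (t < T)%N -> forall x : R,
    0 <= vpi T alpha c K G mu theta sT1 t x - v T alpha c K G mu t x /\
    vpi T alpha c K G mu theta sT1 t x - v T alpha c K G mu t x
    = Vf T alpha c K G mu theta sT1 t x - Vstar T alpha c K G mu t x
      + eps T alpha c K G mu theta sT1 t x.
Proof.
have hal0 : 0 <= alpha by case/andP: halpha => /ltW.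
have cvx : forall t, (t < T)%N -> exists m, forall y, m <= Cfun alpha c G mu t y.
  move=> t ht; apply: conv_lb; [exact: hCconv | exact: hCcoer].
have hIg : forall t, grid theta (Igrid T alpha c K G mu theta sT1 t) /\
    Igrid T alpha c K G mu theta sT1 t <
    Num.min (Ibar T alpha c K G mu theta sT1 t.+1 - theta) (Cm alpha c G mu t).
  move=> t; exact: Igrid_gen.
have hIbar : forall t, (t.+1 < T)%N ->
    Ibar T alpha c K G mu theta sT1 t <= Igrid T alpha c K G mu theta sT1 t.
  move=> t ht.
  rewrite /Ibar (_ : (T - 1 - t = (T - 1 - t.+1).+1)%N); last by lia.
  rewrite /=.
  rewrite (_ : (T - 1 - (T - 1 - t.+1).+1 = t)%N); last by lia.
  apply: (Ibar_gen _ theta (Cfun alpha c G mu t)).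
  - exact: htheta.
  - apply: hK0; lia.
  - exact: (hIg t).1.
  - apply: hCcoer; lia.
have sS : forall t, (t < T)%N ->
    sp T alpha c K G mu theta sT1 t <= Sp T alpha c K G mu theta sT1 t.
  move=> t ht.
  have [e|ht1] : t = (T - 1)%N \/ (t.+1 < T)%N by lia.
    by rewrite e /sp /Sp subnn /=.
  have hISU : Igrid T alpha c K G mu theta sT1 t <= SU alpha c K G mu theta t.
    apply: le_trans (_ : Cm alpha c G mu t <= _).
      have := (hIg t).2; rewrite lt_min => /andP[_ h]; exact: ltW.
    apply: SU_gen => //; exact: hCcoer.
  rewrite /sp /Sp (_ : (T - 1 - t = (T - 1 - t.+1).+1)%N); last by lia.
  rewrite /=.
  rewrite (_ : (T - 1 - (T - 1 - t.+1).+1 = t)%N); last by lia.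
  case: (sS_gen _ theta (fun z => Cfun alpha c G mu t z + alpha *
        dsum mu theta t (Vof (K t.+1) (stgaux T alpha c K G mu theta sT1 (T - 1 - t.+1))) z)
        (Igrid T alpha c K G mu theta sT1 t) (SU alpha c K G mu theta t)
        (Ibar T alpha c K G mu theta sT1 t) (K t) htheta (hK0 t ht) (hIg t).1
        (hIbar t ht1) hISU) => _ h.
  exact: h.
pose vset t x := [set r | exists y, x <= y /\
   r = K t * delta (y - x) + c t * (y - x) + G t y
       + alpha * Ex mu t (fun d => v T alpha c K G mu t.+1 (y - d))].
have v_unf : forall t x, (t < T)%N -> v T alpha c K G mu t x = inf (vset t x).
  move=> t x ht; rewrite /v (_ : (T - t = (T - t.+1).+1)%N); last by lia.
  rewrite /=. by rewrite (_ : (T - (T - t.+1).+1 = t)%N); last by lia.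
have vT : forall z, v T alpha c K G mu T z = - c T * z.
  by move=> z; rewrite /v subnn.
have vpiT : forall z, vpi T alpha c K G mu theta sT1 T z = - c T * z.
  by move=> z; rewrite /vpi subnn.
have vpi_unf : forall t x, (t < T)%N -> vpi T alpha c K G mu theta sT1 t x =
    K t * delta (ypol T alpha c K G mu theta sT1 t x - x)
    + c t * (ypol T alpha c K G mu theta sT1 t x - x)
    + G t (ypol T alpha c K G mu theta sT1 t x)
    + alpha * Ex mu t (fun d => vpi T alpha c K G mu theta sT1 t.+1
                                  (ypol T alpha c K G mu theta sT1 t x - d)).
  move=> t x ht; rewrite /vpi (_ : (T - t = (T - t.+1).+1)%N); last by lia.
  rewrite /=. by rewrite (_ : (T - (T - t.+1).+1 = t)%N); last by lia.
have elb : forall t, (t < T)%N -> forall m1,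
    (forall z, m1 <= v T alpha c K G mu t.+1 z + c t.+1 * z) ->
    exists L, forall x, lbound (vset t x) (L - c t * x).
  move=> t ht m1 hm1.
  have [mC hmC] := cvx t ht.
  exists (mC + alpha * m1) => x r [y [hy ->]].
  have [iA eA] := Ex_aff R mu t (m1 - c t.+1 * y) (c t.+1) (hDmean t ht).
  have hE : m1 - c t.+1 * y + c t.+1 * Ex mu t id <=
            Ex mu t (fun d => v T alpha c K G mu t.+1 (y - d)).
    rewrite -eA; apply: ExLe => //; first exact: hEv.
    move=> d; have := hm1 (y - d); lra.
  have hE2 := ler_wpM2l hal0 hE.
  have hC := hmC y; rewrite /Cfun in hC.
  have hKd : 0 <= K t * delta (y - x) by rewrite mulr_ge0 ?delta_ge0 ?hK0.
  nra.
have vlb : forall n t, (n + t = T)%N ->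
    exists m, forall z, m <= v T alpha c K G mu t z + c t * z.
  elim=> [|n IH] t hnt.
    rewrite add0n in hnt; subst t; exists 0 => z; rewrite vT; lra.
  have ht : (t < T)%N by lia.
  have [m1 hm1] := IH t.+1 ltac:(lia).
  have [L hL] := elb t ht m1 hm1.
  exists L => z; rewrite v_unf //.
  rewrite -lerBlDr; apply: lb_le_inf; last exact: hL.
  exists (K t * delta (z - z) + c t * (z - z) + G t z
       + alpha * Ex mu t (fun d => v T alpha c K G mu t.+1 (z - d))), z.
  by split.
have yge : forall t x, (t < T)%N -> x <= ypol T alpha c K G mu theta sT1 t x.
  move=> t x ht; rewrite /ypol; case: ifP => // h.
  apply: ltW; apply: lt_le_trans h (sS t ht).
have vge : forall n t, (n + t = T)%N -> forall x,
    v T alpha c K G mu t x <= vpi T alpha c K G mu theta sT1 t x.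
  elim=> [|n IH] t hnt x.
    rewrite add0n in hnt; subst t; by rewrite vT vpiT.
  have ht : (t < T)%N by lia.
  have [m1 hm1] := vlb n t.+1 ltac:(lia).
  have [L hL] := elb t ht m1 hm1.
  rewrite v_unf // vpi_unf //.
  set y := ypol T alpha c K G mu theta sT1 t x.
  apply: le_trans (_ : K t * delta (y - x) + c t * (y - x) + G t y
       + alpha * Ex mu t (fun d => v T alpha c K G mu t.+1 (y - d)) <= _).
    apply: (ge_inf (ex_intro _ _ (hL x))). exists y; split => //. exact: yge.
  rewrite lerD2l; apply: ler_wpM2l => //.
  apply: ExLe; [exact: hEv | exact: hEvpi | ].
  move=> d; apply: (IH t.+1); lia.
have vid : forall n t, (n + t.+1 = T)%N -> forall x,
    vpi T alpha c K G mu theta sT1 t x =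
    Vf T alpha c K G mu theta sT1 t x - c t * x + eps T alpha c K G mu theta sT1 t x.
  elim=> [|n IH] t hnt x.
    rewrite add0n in hnt.
    have ht : (t < T)%N by lia.
    have e0 : (T - 1 - t = 0)%N by lia.
    have eT1 : (T - 1 = t)%N by lia.
    have hE : forall y, Ex mu t (fun d => vpi T alpha c K G mu theta sT1 t.+1 (y - d))
                = - c T * y + c T * Ex mu t id.
      move=> y; rewrite -(Ex_aff R mu t (- c T * y) (c T) (hDmean t ht)).2.
      congr (Ex mu t _); apply: funext => d; rewrite hnt vpiT; ring.
    rewrite vpi_unf // hE /ypol /sp /Sp /Vf /Vof /eps e0 /= eT1.
    rewrite eT1 in hsT1.
    rewrite -hnt.
    case: (ltP x sT1) => hx.
      rewrite delta_pos; last lra.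
      rewrite /Cfun; ring.
    rewrite subrr delta0 /Cfun; ring.
  have ht : (t < T)%N by lia.
  have ht1 : (t.+1 < T)%N by lia.
  have hE : forall y, Ex mu t (fun d => vpi T alpha c K G mu theta sT1 t.+1 (y - d))
     = Ex mu t (fun d => Vf T alpha c K G mu theta sT1 t.+1 (y - d))
       + (- c t.+1 * y + c t.+1 * Ex mu t id)
       + Ex mu t (fun d => eps T alpha c K G mu theta sT1 t.+1 (y - d)).
    move=> y.
    have [iA eA] := Ex_aff R mu t (- c t.+1 * y) (c t.+1) (hDmean t ht).
    have iV : (mu t).-integrable setT
        (fun d => (Vf T alpha c K G mu theta sT1 t.+1 (y - d))%:E).
      exact: (hEV t.+1 ltac:(lia) y).
    have iE := hEeps t ht1 y.
    rewrite -eA -ExD // -ExD //; last exact: (integrableD measurableT iV iA).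
    congr (Ex mu t _); apply: funext => d.
    rewrite (IH t.+1 ltac:(lia)); ring.
  have eHf : forall y, Hf T alpha c K G mu theta sT1 t y =
      Cfun alpha c G mu t y + alpha * dsum mu theta t (Vf T alpha c K G mu theta sT1 t.+1) y.
    move=> y; rewrite /Hf (_ : (T - 1 - t = (T - 1 - t.+1).+1)%N); last by lia.
    rewrite /=. by rewrite (_ : (T - 1 - (T - 1 - t.+1).+1 = t)%N); last by lia.
  have eeps : eps T alpha c K G mu theta sT1 t x =
      alpha * Aerr T alpha c K G mu theta sT1 t.+1 (ypol T alpha c K G mu theta sT1 t x)
      + alpha * Ex mu t (fun d => eps T alpha c K G mu theta sT1 t.+1
                                    (ypol T alpha c K G mu theta sT1 t x - d)).
    rewrite /eps (_ : (T - 1 - t = (T - 1 - t.+1).+1)%N); last by lia.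
    rewrite /=. by rewrite (_ : (T - 1 - (T - 1 - t.+1).+1 = t)%N); last by lia.
  have eVf : Vf T alpha c K G mu theta sT1 t x =
      if x < sp T alpha c K G mu theta sT1 t
      then Hf T alpha c K G mu theta sT1 t (Sp T alpha c K G mu theta sT1 t) + K t
      else Hf T alpha c K G mu theta sT1 t x by [].
  rewrite vpi_unf // hE eVf eeps /Aerr /= /ypol.
  have hsS := sS t ht.
  case: (ltP x (sp T alpha c K G mu theta sT1 t)) => hx.
    rewrite delta_pos; last lra.
    rewrite eHf /Cfun; ring.
  rewrite subrr delta0 eHf /Cfun; ring.
move=> t ht x.
have hid := vid (T - t.+1)%N t ltac:(lia) x.
have hge := vge (T - t)%N t ltac:(lia) x.
split; first lra.
rewrite hid /Vstar; ring.
Qed.
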